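(* Consider Directed Simplicial Neural Networks (Dir-SNNs) applied to the directed flag complexes of digraphs, and Directed Graph Neural Networks (Dir-GNNs) applied to the digraphs themselves, all initialized with identical constant input features. There exists a Dir-SNN that is strictly more powerful than Dir-GNNs at distinguishing non-isomorphic digraphs. That is: (i) for any two digraphs $G_1, G_2$ that some Dir-GNN distinguishes, this Dir-SNN distinguishes their directed flag complexes $\mathcal{K}_{G_1}, \mathcal{K}_{G_2}$; and (ii) there exist non-isomorphic digraphs $G_1, G_2$ that no Dir-GNN distinguishes but whose directed flag complexes this Dir-SNN distinguishes.
   Context: A directed simplicial complex is a pair $\mathcal{K}=(V,\Sigma)$, where $V$ is a finite vertex set and $\Sigma$ is a collection of non-empty ordered tuples of vertices (directed simplices) such that every non-empty ordered subtuple of a member of $\Sigma$ is also in $\Sigma$. A tuple $\sigma=(v_0,\dots,v_k)$ has dimension $\dim\sigma=k$ and is called a $k$-simplex. For $0\le i\le k$, the face map $d_i$ sends $\sigma$ to the $(k-1)$-simplex $(v_0,\dots,\hat v_i,\dots,v_k)$ obtained by deleting the $i$-th vertex while keeping the order of the remaining vertices; $d_i^{-1}(\sigma)$ denotes the set of simplices $\rho$ with $d_i(\rho)=\sigma$. The boundary of $\sigma$ is $\mathcal{B}(\sigma)=\{d_i(\sigma):0\le i\le\dim\sigma\}$, and the coboundary is $\mathcal{C}(\sigma)=\bigcup_{i=0}^{\dim\sigma+1}d_i^{-1}(\sigma)$. For simplices of equal dimension and integer $k \ge 1$, the lower $(k,i,j)$-adjacency $\mathcal{A}^{ij}_{\downarrow,k}(\sigma)$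 is the set of $\tau$ with $\dim\tau=\dim\sigma$ for which there is a simplex $\kappa$ with $\dim\kappa=\dim\sigma-k$ (taken to be $0$ if $k>\dim\sigma$) and $\kappa\subseteq d_i(\sigma)$, $\kappa\subseteq d_j(\tau)$. The upper $(k,i,j)$-adjacency $\mathcal{A}^{ij}_{\uparrow,k}(\sigma)$ is the set of $\tau$ with $\dim\tau=\dim\sigma$ for which there is a $\kappa$ with $\dim\kappa=\dim\sigma+k$ (taken to be $\dim\mathcal{K}$ if $k > \dim\mathcal{K} - \dim\sigma$), $\sigma\subseteq d_i(\kappa)$ and $\tau\subseteq d_j(\kappa)$. Here $\subseteq$ denotes being an ordered subtuple. The directed flag complex $\mathcal{K}_G$ of a digraph $G$ is the directed simplicial complex whose $k$-simplices are the tuples $(v_0,\dots,v_k)$ of distinct vertices with $(v_a,v_b)$ a directed edge of $G$ for all $a<b$. Its $0$- and $1$-simplices are the vertices and edges of $G$. A Dir-SNN layer $l$ updates the feature vector $\mathbf{x}_\sigma^l$ of each simplex $\sigma$ using a chosen collection of lower and upper $(k,i,j)$-adjacencies. For each chosen adjacency $\mathcal{A}$, a message $\mathbf{m}_{\sigma,\mathcal{A}}^{l+1}$ is formed by applying an aggregator $\bigoplus_{\tau\in\mathcal{A}(\sigma)}$ to $\psi_{\mathcal{A}}(\mathbf{x}^l_\sigma,\mathbf{x}^l_\tau,\mathbf{x}^l_\kappa)$, where $\kappa$ is the witnessing simplex. Boundary and coboundary messages are formed as $\bigoplus_{\tau\in\mathcal{B}(\sigma)}\psi_{\mathcal{B}}(\mathbf{x}^l_\sigma,\mathbf{x}^l_\tau)$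 and $\bigoplus_{\tau\in\mathcal{C}(\sigma)}\psi_{\mathcal{C}}(\mathbf{x}^l_\sigma,\mathbf{x}^l_\tau)$. The update is $\mathbf{x}_\sigma^{l+1}=\phi(\mathbf{x}_\sigma^l,\text{all messages})$, with learnable $\psi$'s and $\phi$. A Dir-GNN on a digraph updates each node $v$ as $\mathbf{x}_v^{l+1}=\phi\big(\mathbf{x}_v^l,\bigoplus_{u\in N_\leftarrow(v)}\psi_\leftarrow(\mathbf{x}_v^l,\mathbf{x}_u^l),\bigoplus_{u\in N_\rightarrow(v)}\psi_\rightarrow(\mathbf{x}_v^l,\mathbf{x}_u^l)\big)$, where $N_\leftarrow(v)=\{u:(u,v)\text{ edge}\}$ and $N_\rightarrow(v)=\{u:(v,u)\text{ edge}\}$. A network distinguishes two inputs if the multisets of final feature vectors (over all simplices, respectively all nodes) differ. *)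

(* Defs.v *)
From Stdlib Require Import Permutation.
From mathcomp Require Import all_boot.
Set Implicit Arguments. Unset Strict Implicit. Unset Printing Implicit Defensive.

Definition face (V : Type) (i : nat) (s : seq V) : seq V := take i s ++ drop i.+1 s.

Definition dim (V : Type) (s : seq V) : nat := (size s).-1.

Definition is_simplex (V : eqType) (e : rel V) (s : seq V) : bool :=
  [&& 0 < size s, uniq s & pairwise e s].

Definition tuples_of_size (V : finType) (n : nat) : seq (seq V) :=
  [seq tval t | t : n.-tuple V].

Definition flag_simplices (V : finType) (e : rel V) : seq (seq V) :=
  [seq s <- flatten [seq tuples_of_size V n | n <- iota 1 #|V|] | is_simplex e s].

Definition cdim (V : finType) (e : rel V) : nat :=
  (foldr maxn 0 [seq size s | s <- flag_simplices e]).-1.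

Definition boundary (V : finType) (e : rel V) (sg : seq V) : seq (seq V) :=
  [seq t <- [seq face i sg | i <- iota 0 (size sg)] | is_simplex e t].

Definition coboundary (V : finType) (e : rel V) (sg : seq V) : seq (seq V) :=
  [seq r <- flag_simplices e |
     (size r == (size sg).+1) && has (fun i => face i r == sg) (iota 0 (size sg).+1)].

Record adj_spec := AdjSpec { adj_up : bool; adj_k : nat; adj_i : nat; adj_j : nat }.

(* tau is (a)-adjacent to sigma, witnessed by kappa *)
Definition adj_rel (V : finType) (e : rel V) (a : adj_spec) (sg tau kap : seq V) : bool :=
  if adj_up a then
    [&& dim tau == dim sg,
        dim kap == (if adj_k a > cdim e - dim sg then cdim e else dim sg + adj_k a),
        adj_i a <= dim kap, adj_j a <= dim kap,
        subseq sg (face (adj_i a) kap) & subseq tau (face (adj_j a) kap)]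
  else
    [&& dim tau == dim sg,
        dim kap == (if adj_k a > dim sg then 0 else dim sg - adj_k a),
        adj_i a <= dim sg, adj_j a <= dim tau,
        subseq kap (face (adj_i a) sg) & subseq kap (face (adj_j a) tau)].

Definition adj_pairs (V : finType) (e : rel V) (a : adj_spec) (sg : seq V)
  : seq (seq V * seq V) :=
  [seq p <- [seq (t, k) | t <- flag_simplices e, k <- flag_simplices e]
     | adj_rel e a sg p.1 p.2].

Record snn_layer (F : Type) : Type := SNNLayer {
  snn_psiA : nat -> F -> F -> F -> F;   (* psi_A for the n-th chosen adjacency *)
  snn_aggA : nat -> seq F -> F;
  snn_psiB : F -> F -> F;
  snn_aggB : seq F -> F;
  snn_psiC : F -> F -> F;
  snn_aggC : seq F -> F;
  snn_phi  : F -> seq F -> F;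
  snn_aggA_inv : forall n s t, Permutation s t -> snn_aggA n s = snn_aggA n t;
  snn_aggB_inv : forall s t, Permutation s t -> snn_aggB s = snn_aggB t;
  snn_aggC_inv : forall s t, Permutation s t -> snn_aggC s = snn_aggC t }.

Record dir_snn (F : Type) : Type := DirSNN {
  snn_init : F;
  snn_layers : seq (snn_layer F) }.

Definition default_adj := AdjSpec false 1 0 0.

Definition snn_step (F : Type) (adjs : seq adj_spec) (L : snn_layer F)
    (V : finType) (e : rel V) (x : seq V -> F) : seq V -> F :=
  fun sg =>
    snn_phi L (x sg)
      ([seq snn_aggA L n
              [seq snn_psiA L n (x sg) (x p.1) (x p.2)
              | p <- adj_pairs e (nth default_adj adjs n) sg]
       | n <- iota 0 (size adjs)]
       ++ [:: snn_aggB L [seq snn_psiB L (x sg) (x t) | t <- boundary e sg];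
              snn_aggC L [seq snn_psiC L (x sg) (x t) | t <- coboundary e sg]]).

Definition snn_features (F : Type) (adjs : seq adj_spec) (N : dir_snn F)
    (V : finType) (e : rel V) : seq V -> F :=
  foldl (fun x L => snn_step adjs L e x) (fun _ => snn_init N) (snn_layers N).

Definition snn_output (F : Type) (adjs : seq adj_spec) (N : dir_snn F)
    (V : finType) (e : rel V) : seq F :=
  [seq snn_features adjs N e sg | sg <- flag_simplices e].

Definition snn_distinguishes (F : Type) (adjs : seq adj_spec) (N : dir_snn F)
    (V1 : finType) (e1 : rel V1) (V2 : finType) (e2 : rel V2) : Prop :=
  ~ Permutation (snn_output adjs N e1) (snn_output adjs N e2).

Record gnn_layer (F : Type) : Type := GNNLayer {
  gnn_psi_in : F -> F -> F;
  gnn_agg_in : seq F -> F;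
  gnn_psi_out : F -> F -> F;
  gnn_agg_out : seq F -> F;
  gnn_phi : F -> F -> F -> F;
  gnn_agg_in_inv : forall s t, Permutation s t -> gnn_agg_in s = gnn_agg_in t;
  gnn_agg_out_inv : forall s t, Permutation s t -> gnn_agg_out s = gnn_agg_out t }.

Record dir_gnn (F : Type) : Type := DirGNN {
  gnn_init : F;
  gnn_layers : seq (gnn_layer F) }.

Definition in_nbrs (V : finType) (e : rel V) (v : V) : seq V := [seq u <- enum V | e u v].
Definition out_nbrs (V : finType) (e : rel V) (v : V) : seq V := [seq u <- enum V | e v u].

Definition gnn_step (F : Type) (L : gnn_layer F) (V : finType) (e : rel V)
    (x : V -> F) : V -> F :=
  fun v => gnn_phi L (x v)
             (gnn_agg_in L [seq gnn_psi_in L (x v) (x u) | u <- in_nbrs e v])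
             (gnn_agg_out L [seq gnn_psi_out L (x v) (x u) | u <- out_nbrs e v]).

Definition gnn_features (F : Type) (N : dir_gnn F) (V : finType) (e : rel V) : V -> F :=
  foldl (fun x L => gnn_step L e x) (fun _ => gnn_init N) (gnn_layers N).

Definition gnn_output (F : Type) (N : dir_gnn F) (V : finType) (e : rel V) : seq F :=
  [seq gnn_features N e v | v <- enum V].

Definition gnn_distinguishes (F : Type) (N : dir_gnn F)
    (V1 : finType) (e1 : rel V1) (V2 : finType) (e2 : rel V2) : Prop :=
  ~ Permutation (gnn_output N e1) (gnn_output N e2).

Definition digraph_iso (V1 : finType) (e1 : rel V1) (V2 : finType) (e2 : rel V2) : Prop :=
  exists f : V1 -> V2, bijective f /\ forall u v, e1 u v = e2 (f u) (f v).

(* Main.v *)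
Require Import Defs.
From Stdlib Require Import Permutation.
From mathcomp Require Import all_boot zify.
Set Implicit Arguments. Unset Strict Implicit. Unset Printing Implicit Defensive.


Lemma perm_eq_Perm (T : eqType) (s t : seq T) : perm_eq s t -> Permutation s t.
Proof.
elim: s t => [|a s IH] t.
  by rewrite perm_sym => /perm_nilP ->.
move=> H; have at_ : a \in t by rewrite -(perm_mem H) mem_head.
case/splitPr: at_ H => t1 t2 H.
have H' : perm_eq s (t1 ++ t2).
  rewrite -(perm_cons a); apply: (perm_trans H).
  by rewrite -cat1s perm_catCA.
by apply: Permutation_cons_app; apply: IH.
Qed.

Lemma Perm_has (T : Type) (p : pred T) (s t : seq T) : Permutation s t -> has p s = has p t.
Proof.
elim=> //= [x l l' _ -> //|x y l|l l' l'' _ -> _ ->] //.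
by rewrite orbCA.
Qed.

Lemma Perm_pmap (T : Type) (s t : seq (option T)) :
  Permutation s t -> Permutation (pmap id s) (pmap id t).
Proof.
elim=> //= [[x|] l l' _ H|[x|] [y|] l|l l' l'' _ H1 _ H2] //=.
- by apply: perm_skip.
- by apply: perm_swap.
- by apply: Permutation_trans H2.
Qed.

Section Flag.
Variables (V : finType) (e : rel V).

Lemma mem_tuples n s : (s \in tuples_of_size V n) = (size s == n).
Proof.
apply/idP/idP.
  by case/mapP=> t _ ->; rewrite size_tuple.
move/eqP=> <-; apply/mapP; exists (in_tuple s) => //; by rewrite mem_enum.
Qed.

Lemma uniq_tuples n : uniq (tuples_of_size V n).
Proof. rewrite /tuples_of_size map_inj_uniq ?enum_uniq //; exact: val_inj. Qed.

Lemma uniq_flat (ns : seq nat) : uniq ns -> uniq (flatten [seq tuples_of_size V n | n <- ns]).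
Proof.
elim: ns => [|n ns IH] //= /andP[nn un].
rewrite cat_uniq uniq_tuples IH // andbT; apply/hasPn => s Hs.
apply/negP; rewrite mem_tuples => /eqP Hsm.
case/flatten_mapP: Hs => m Hm; rewrite mem_tuples Hsm => /eqP Hmn; by rewrite Hmn Hm in nn.
Qed.

Lemma uniq_flag : uniq (flag_simplices e).
Proof. by rewrite filter_uniq // uniq_flat // iota_uniq. Qed.

Lemma mem_flag s : (s \in flag_simplices e) = is_simplex e s.
Proof.
rewrite mem_filter andbC; case Hs: (is_simplex e s); last by rewrite andbF.
rewrite andbT; move: Hs => /and3P[s0 us _].
apply/flatten_mapP; exists (size s); last by rewrite mem_tuples.
rewrite mem_iota s0 /= add1n ltnS -(card_uniqP us); exact: max_card.
Qed.

Lemma cdim_ge s : s \in flag_simplices e -> (size s).-1 <= cdim e.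
Proof.
rewrite /cdim => Hs; rewrite -!subn1; apply: leq_sub2r.
move: (map_f size Hs); elim: [seq size _ | _ <- _] => //= a l IH.
rewrite in_cons => /orP[/eqP->|/IH H]; first exact: leq_maxl.
exact: (leq_trans H (leq_maxr _ _)).
Qed.

End Flag.

Lemma Perm_map (T U : Type) (f : T -> U) (s t : seq T) :
  Permutation s t -> Permutation (map f s) (map f t).
Proof.
elim=> //= [x l l' _ H|x y l|l l' l'' _ H1 _ H2].
- by apply: perm_skip.
- by apply: perm_swap.
- by apply: Permutation_trans H2.
Qed.


Section Adj.
Variables (V : finType) (e : rel V).
Hypothesis irr : irreflexive e.

Lemma simplex1 u : is_simplex e [:: u].
Proof. by []. Qed.

Lemma simplex2 u w : is_simplex e [:: u; w] = e u w.
Proof.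
rewrite /is_simplex /= inE !andbT; case H: (e u w); last by rewrite andbF.
rewrite andbT; apply/eqP => E; by rewrite E irr in H.
Qed.

Lemma mem_adj a sg p : (p \in adj_pairs e a sg) =
  [&& adj_rel e a sg p.1 p.2, p.1 \in flag_simplices e & p.2 \in flag_simplices e].
Proof.
rewrite mem_filter; congr (_ && _); apply/allpairsP/andP.
  by case=> [[t k]] [/= Ht Hk ->].
by case: p => t k [/= Ht Hk]; exists (t, k).
Qed.

Lemma uniq_adj a sg : uniq (adj_pairs e a sg).
Proof.
rewrite filter_uniq // allpairs_uniq ?uniq_flag //.
by move=> [? ?] [? ?] _ _.
Qed.

Lemma cdim1 u w : e u w -> 1 <= cdim e.
Proof.
move=> H; have := @cdim_ge V e [:: u; w]; rewrite mem_flag simplex2 H; by apply.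
Qed.

Lemma adj_in v : perm_eq (adj_pairs e (AdjSpec true 1 0 1) [:: v])
                          [seq ([:: u], [:: u; v]) | u <- in_nbrs e v].
Proof.
apply: uniq_perm; first exact: uniq_adj.
  rewrite map_inj_uniq; first by rewrite filter_uniq // enum_uniq.
  by move=> x y [].
move=> [t k]; rewrite mem_adj /adj_rel /= (_ : dim [:: v] = 0) //; apply/idP/idP.
  case/and3P=> /and5P[/eqP Ht Hk H1k Hsv Hst] Htf Hkf.
  have dk1 : dim k = 1.
    move: Hk; case: ifP => [Hc /eqP Hd|_ /eqP -> //].
    by move: H1k Hc; rewrite Hd; lia.
  have [c Etc] : exists c, t = [:: c].
    move: Htf; rewrite mem_flag; case: (t) Ht => [|c [|d t']] //= _ _; by exists c.
  subst t; rewrite sub1seq in Hsv; rewrite sub1seq in Hst.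
  case: k dk1 Hsv Hst Hkf {Hk H1k} => [|a [|b [|c' k']]] // _.
  rewrite /face /= !inE => /eqP -> /eqP ->; rewrite mem_flag simplex2 => Hav.
  apply/mapP; exists a => //; by rewrite /in_nbrs mem_filter mem_enum Hav.
case/mapP=> u; rewrite /in_nbrs mem_filter mem_enum andbT => Huv [-> ->].
rewrite !mem_flag simplex2 Huv simplex1 /= !andbT.
have c1 := cdim1 Huv; rewrite subn0 ltnNge c1 /=.
by rewrite !eqxx.
Qed.

Lemma adj_out v : perm_eq (adj_pairs e (AdjSpec true 1 1 0) [:: v])
                          [seq ([:: u], [:: v; u]) | u <- out_nbrs e v].
Proof.
apply: uniq_perm; first exact: uniq_adj.
  rewrite map_inj_uniq; first by rewrite filter_uniq // enum_uniq.
  by move=> x y [].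
move=> [t k]; rewrite mem_adj /adj_rel /= (_ : dim [:: v] = 0) //; apply/idP/idP.
  case/and3P=> /and5P[/eqP Ht Hk H1k Hsv Hst] Htf Hkf.
  have dk1 : dim k = 1.
    move: Hk; case: ifP => [Hc /eqP Hd|_ /eqP -> //].
    by move: H1k Hc; rewrite Hd; lia.
  have [c Etc] : exists c, t = [:: c].
    move: Htf; rewrite mem_flag; case: (t) Ht => [|c [|d t']] //= _ _; by exists c.
  subst t; rewrite sub1seq in Hsv; rewrite sub1seq in Hst.
  case: k dk1 Hsv Hst Hkf {Hk H1k} => [|a [|b [|c' k']]] // _.
  rewrite /face /= !inE => /eqP -> /eqP ->; rewrite mem_flag simplex2 => Hav.
  apply/mapP; exists b => //; by rewrite /out_nbrs mem_filter mem_enum Hav.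
case/mapP=> u; rewrite /out_nbrs mem_filter mem_enum andbT => Huv [-> ->].
rewrite !mem_flag simplex2 Huv simplex1 /= !andbT.
have c1 := cdim1 Huv; rewrite subn0 ltnNge c1 /=.
by rewrite !eqxx.
Qed.

End Adj.


Definition adjs0 := [:: AdjSpec true 1 0 1; AdjSpec true 1 1 0].

Section Sim.
Variables (Fg : Type) (N : dir_gnn Fg).
Definition val' (a : option Fg) : Fg := odflt (gnn_init N) a.

Definition conv (L : gnn_layer Fg) : snn_layer (option Fg).
refine (@SNNLayer _
  (fun n a b _ => Some (if n == 0 then gnn_psi_in L (val' a) (val' b)
                        else gnn_psi_out L (val' a) (val' b)))
  (fun n s => Some (if n == 0 then gnn_agg_in L (map val' s) else gnn_agg_out L (map val' s)))
  (fun _ _ => None) (fun s => if s is [::] then None else Some (gnn_init N))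
  (fun _ _ => None) (fun _ => None)
  (fun x ms => if nth None ms 2 is None then
                 Some (gnn_phi L (val' x) (val' (nth None ms 0)) (val' (nth None ms 1)))
               else None) _ _ _).
- move=> n s t P; case: (n == 0); congr Some.
    by apply: gnn_agg_in_inv; apply: Perm_map.
  by apply: gnn_agg_out_inv; apply: Perm_map.
- move=> [|a s] [|b t] // P.
    by have := Permutation_nil_cons P.
  by have := Permutation_nil_cons (Permutation_sym P).
- by [].
Defined.

Definition tagL : gnn_layer Fg :=
  @GNNLayer _ (fun _ _ => gnn_init N) (fun _ => gnn_init N) (fun _ _ => gnn_init N)
    (fun _ => gnn_init N) (fun a _ _ => a) (fun _ _ _ => erefl) (fun _ _ _ => erefl).

Definition simM : dir_snn (option Fg) := DirSNN None (map conv (tagL :: gnn_layers N)).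

Variables (V : finType) (e : rel V).
Hypothesis irr : irreflexive e.

Lemma boundary_cons sg : 1 < size sg -> is_simplex e sg -> exists r, boundary e sg = face 0 sg :: r.
Proof.
case: sg => [|a [|b s]] // _ /and3P[_ Hu Hp]; move: Hu Hp.
rewrite cons_uniq pairwise_cons => /andP[_ us] /andP[_ ps].
have Hb : is_simplex e (b :: s) by rewrite /is_simplex us ps.
rewrite /boundary /= (_ : face 0 [:: a, b & s] = b :: s) // Hb.
by eexists.
Qed.

Lemma step_nonvertex L x sg : sg \in flag_simplices e -> size sg != 1 ->
  snn_step adjs0 (conv L) e x sg = None.
Proof.
rewrite mem_flag => Hs H1.
have H2 : 1 < size sg by move: Hs H1 => /and3P[H0 _ _]; lia.
have [r Hr] := boundary_cons H2 Hs.
by rewrite /snn_step /= Hr.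
Qed.

Lemma step_vertex L x v : snn_step adjs0 (conv L) e x [:: v] =
  Some (gnn_phi L (val' (x [:: v]))
    (gnn_agg_in L (map val' [seq Some (gnn_psi_in L (val' (x [:: v])) (val' (x p.1)))
                            | p <- adj_pairs e (AdjSpec true 1 0 1) [:: v]]))
    (gnn_agg_out L (map val' [seq Some (gnn_psi_out L (val' (x [:: v])) (val' (x p.1)))
                            | p <- adj_pairs e (AdjSpec true 1 1 0) [:: v]]))).
Proof. by []. Qed.

Definition Inv (x : seq V -> option Fg) (g : V -> Fg) :=
  (forall v, x [:: v] = Some (g v)) /\
  (forall sg, sg \in flag_simplices e -> size sg != 1 -> x sg = None).

Lemma step_inv L x g : Inv x g -> Inv (snn_step adjs0 (conv L) e x) (gnn_step L e g).
Proof.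
move=> [Hv Hn]; split; last by move=> sg; apply: step_nonvertex.
move=> v; rewrite step_vertex /gnn_step Hv /=; congr (Some (gnn_phi _ _ _ _)).
  apply: gnn_agg_in_inv; rewrite -map_comp.
  apply: Permutation_trans; first by apply: Perm_map; apply: perm_eq_Perm; apply: adj_in.
  by rewrite -map_comp; apply: Permutation_refl'; apply: eq_map => u /=; rewrite Hv.
apply: gnn_agg_out_inv; rewrite -map_comp.
apply: Permutation_trans; first by apply: Perm_map; apply: perm_eq_Perm; apply: adj_out.
by rewrite -map_comp; apply: Permutation_refl'; apply: eq_map => u /=; rewrite Hv.
Qed.

Lemma fold_inv Ls x g : Inv x g ->
  Inv (foldl (fun x L => snn_step adjs0 L e x) x (map conv Ls))
      (foldl (fun g L => gnn_step L e g) g Ls).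
Proof.
elim: Ls x g => [|L Ls IH] x g H //=.
by apply: IH; apply: step_inv.
Qed.

Lemma feat_inv : Inv (snn_features adjs0 simM e) (gnn_features N e).
Proof.
rewrite /snn_features /gnn_features /=.
apply: fold_inv; split; last by move=> sg; apply: step_nonvertex.
by move=> v; rewrite step_vertex.
Qed.

Lemma pmap_Some (T : Type) (l : seq T) : pmap id (map Some l) = l.
Proof. by elim: l => //= a l ->. Qed.

Lemma vert_perm : perm_eq [seq s <- flag_simplices e | size s == 1] [seq [:: v] | v <- enum V].
Proof.
apply: uniq_perm.
- by rewrite filter_uniq // uniq_flag.
- by rewrite map_inj_uniq ?enum_uniq // => a b [].
move=> s; rewrite mem_filter mem_flag; apply/idP/idP.
  by case: s => [|a [|b s]] //= _; apply/mapP; exists a; rewrite ?mem_enum.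
by case/mapP=> a _ ->.
Qed.

Lemma out_perm : Permutation (pmap id (snn_output adjs0 simM e)) (gnn_output N e).
Proof.
have [Hv Hn] := feat_inv.
set x := snn_features adjs0 simM e.
set P := fun s : seq V => size s == 1.
have E : perm_eq (flag_simplices e)
   ([seq [:: v] | v <- enum V] ++ [seq s <- flag_simplices e | predC P s]).
  by rewrite -(perm_filterC P) perm_cat2r vert_perm.
apply: Permutation_trans.
  apply: Perm_pmap; apply: Perm_map; apply: perm_eq_Perm; exact: E.
rewrite map_cat pmap_cat -map_comp.
rewrite (@eq_map _ _ _ (Some \o gnn_features N e)); last by move=> v /=; rewrite Hv.
rewrite map_comp pmap_Some.
have H0 : forall l, (forall s, s \in l -> x s = None) -> pmap id (map x l) = [::].
  elim=> //= a l IH Hl; rewrite Hl ?mem_head //= IH // => s Hs.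
  by apply: Hl; rewrite in_cons Hs orbT.
rewrite H0 ?cats0 //.
by move=> s; rewrite mem_filter => /andP[H1 H2]; apply: Hn.
Qed.

End Sim.


Definition e1 : rel 'I_4 := fun i j => (j == (i + 1) %% 4 :> nat) || (j == (i + 2) %% 4 :> nat).
Definition e2 : rel 'I_4 := fun i j => odd i != odd j.

Lemma irr1 : irreflexive e1.
Proof. by case=> [[|[|[|[|m]]]] H]. Qed.
Lemma irr2 : irreflexive e2.
Proof. by move=> i; rewrite /e2 eqxx. Qed.

Lemma E4 : enum 'I_4 = [:: @Ordinal 4 0 isT; @Ordinal 4 1 isT; @Ordinal 4 2 isT; @Ordinal 4 3 isT].
Proof. apply: (inj_map val_inj). by rewrite val_enum_ord. Qed.

Lemma deg1_in v : size (in_nbrs e1 v) = 2.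
Proof. by rewrite /in_nbrs E4; case: v => [[|[|[|[|m]]]] H]. Qed.
Lemma deg1_out v : size (out_nbrs e1 v) = 2.
Proof. by rewrite /out_nbrs E4; case: v => [[|[|[|[|m]]]] H]. Qed.
Lemma deg2_in v : size (in_nbrs e2 v) = 2.
Proof. by rewrite /in_nbrs E4; case: v => [[|[|[|[|m]]]] H]. Qed.
Lemma deg2_out v : size (out_nbrs e2 v) = 2.
Proof. by rewrite /out_nbrs E4; case: v => [[|[|[|[|m]]]] H]. Qed.

Lemma no_tri2 a b c : e2 a b -> e2 b c -> e2 a c -> False.
Proof. by rewrite /e2; case: (odd a); case: (odd b); case: (odd c). Qed.

Definition o0 : 'I_4 := @Ordinal 4 0 isT.
Definition o1 : 'I_4 := @Ordinal 4 1 isT.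
Definition o2 : 'I_4 := @Ordinal 4 2 isT.

Lemma not_iso : ~ digraph_iso e1 e2.
Proof.
case=> f [_ Hf].
have h01 := Hf o0 o1; have h12 := Hf o1 o2; have h02 := Hf o0 o2.
apply: (@no_tri2 (f o0) (f o1) (f o2)); by [rewrite -h01 | rewrite -h12 | rewrite -h02].
Qed.

Section Const.
Variable (Fg : Type).
Definition cf (Ls : seq (gnn_layer Fg)) (c : Fg) : Fg :=
  foldl (fun c L => gnn_phi L c (gnn_agg_in L (nseq 2 (gnn_psi_in L c c)))
                                (gnn_agg_out L (nseq 2 (gnn_psi_out L c c)))) c Ls.

Lemma map_cst (T U : Type) (a : U) (l : seq T) : map (fun _ => a) l = nseq (size l) a.
Proof. by elim: l => //= x l ->. Qed.

Lemma gnn_const (V : finType) (e : rel V) :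
  (forall v, size (in_nbrs e v) = 2) -> (forall v, size (out_nbrs e v) = 2) ->
  forall Ls x c, (forall v, x v = c) ->
  forall v, foldl (fun x L => gnn_step L e x) x Ls v = cf Ls c.
Proof.
move=> Hi Ho; elim=> [|L Ls IH] x c Hx v /=; first exact: Hx.
apply: IH => w; rewrite /gnn_step Hx.
rewrite (@eq_map _ _ _ (fun _ => gnn_psi_in L c c)); last by move=> u; rewrite Hx.
rewrite (@eq_map _ _ (fun u => gnn_psi_out L c (x u)) (fun _ => gnn_psi_out L c c));
  last by move=> u; rewrite Hx.
by rewrite !map_cst Hi Ho.
Qed.
End Const.

Lemma gnn_same (F : Type) (N : dir_gnn F) : ~ gnn_distinguishes N e1 e2.
Proof.
apply; rewrite /gnn_output.
rewrite (eq_map (gnn_const deg1_in deg1_out (gnn_layers N) (x := fun _ => gnn_init N) (c := gnn_init N) (fun _ => erefl))).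
rewrite (eq_map (gnn_const deg2_in deg2_out (gnn_layers N) (x := fun _ => gnn_init N) (c := gnn_init N) (fun _ => erefl))).
exact: Permutation_refl.
Qed.

Definition bL : snn_layer bool.
refine (@SNNLayer bool (fun _ _ _ _ => false) (fun _ _ => false) (fun _ b => b) (fun s => has id s)
  (fun _ _ => false) (fun _ => false) (fun _ ms => nth false ms 2) _ _ _).
- by [].
- by move=> s t; apply: Perm_has.
- by [].
Defined.

Definition M2 : dir_snn bool := DirSNN true [:: bL; bL].

Lemma feat2 (V : finType) (e : rel V) sg :
  snn_features adjs0 M2 e sg = has (fun t => has (fun _ => true) (boundary e t)) (boundary e sg).
Proof. by rewrite /snn_features /= /snn_step /= has_map; apply: eq_has => t /=; rewrite has_map. Qed.

Lemma out1_true : has id (snn_output adjs0 M2 e1).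
Proof.
apply/hasP; exists true => //; apply/mapP; exists [:: o0; o1; o2].
  by rewrite mem_flag; vm_compute.
by rewrite feat2; vm_compute.
Qed.

Lemma size_face (T : Type) i (s : seq T) : i < size s -> size (face i s) = (size s).-1.
Proof. rewrite /face size_cat size_take size_drop => H; rewrite H; lia. Qed.

Lemma out2_false : ~~ has id (snn_output adjs0 M2 e2).
Proof.
apply/hasPn => b /mapP [sg Hsg ->]; rewrite feat2.
have Hs : size sg <= 2.
  move: Hsg; rewrite mem_flag => /and3P[_ _].
  case: sg => [|a [|b' [|c r]]] //.
  rewrite !pairwise_cons /= => /andP[/and3P[Hab Hac _] /andP[/andP[Hbc _] _]].
  by case: (no_tri2 Hab Hbc Hac).
apply/hasPn => t; rewrite mem_filter => /andP[_ /mapP[i]].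
rewrite mem_iota add0n => /andP[_ Hi] ->.
have : size (face i sg) <= 1 by rewrite size_face //; lia.
by case: (face i sg) => [|a [|b' r]].
Qed.

Theorem theorem1 :
  exists adjs : seq adj_spec,
    all (fun a => 0 < adj_k a) adjs /\
    (forall (V1 V2 : finType) (e1 : rel V1) (e2 : rel V2),
        irreflexive e1 -> irreflexive e2 ->
        (exists (F : Type) (N : dir_gnn F), gnn_distinguishes N e1 e2) ->
        exists (F : Type) (M : dir_snn F), snn_distinguishes adjs M e1 e2) /\
    (exists (V1 V2 : finType) (e1 : rel V1) (e2 : rel V2),
        [/\ irreflexive e1, irreflexive e2, ~ digraph_iso e1 e2,
            (forall (F : Type) (N : dir_gnn F), ~ gnn_distinguishes N e1 e2) &
            exists (F : Type) (M : dir_snn F), snn_distinguishes adjs M e1 e2]).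
Proof.
exists adjs0; split; first by [].
split.
  move=> V1 V2 f1 f2 i1 i2 [F [N Hd]]; exists (option F), (simM N) => Hp; apply: Hd.
  apply: Permutation_trans (Permutation_sym (out_perm N i1)) _.
  apply: Permutation_trans (out_perm N i2).
  exact: Perm_pmap Hp.
exists 'I_4, 'I_4, e1, e2; split.
- exact: irr1.
- exact: irr2.
- exact: not_iso.
- exact: gnn_same.
- exists bool, M2 => Hp.
  have := Perm_has id Hp; rewrite out1_true => H.
  by move: out2_false; rewrite -H.
Qed.
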